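(* Let $S$ be a finite training set of examples $(\mathbf{x},y)$ with $\mathbf{x}\in[-1,1]^d$, $y\in\{1,\dots,k\}$. Let $F,\bar F\subseteq\{1,\dots,d\}$ with $\bar F\setminus F\neq\emptyset$, and let $$W\in\arg\min_{V:\,\mathrm{supp}(V)\subseteq F}L(V),\qquad W^\star\in\arg\min_{V:\,\mathrm{supp}(V)\subseteq\bar F}L(V)$$ (both minimizers assumed to exist). Let $j\in\arg\max_{i\in\{1,\dots,d\}}\|\nabla_iL(W)\|_1$. If $L(W)>L(W^\star)$, then $$L(W)-\inf_{\mathbf{u}\in\mathbb{R}^k}L(W+\mathbf{u}\,\mathbf{e}_j^\top)\;\ge\;\frac{\big(L(W)-L(W^\star)\big)^2}{4\Big(\sum_{i\in\bar F\setminus F}\|W^\star_{\cdot,i}\|_\infty\Big)^2}.$$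
   Context: For $V\in\mathbb{R}^{k\times d}$, $V_{\cdot,i}$ is its $i$-th column and $\mathrm{supp}(V)=\{i: V_{\cdot,i}\neq0\}$. The loss of $W$ on $(\mathbf{x},y)$ is $\ell(W,(\mathbf{x},y))=\ln\sum_{y'\in\{1,\dots,k\}}\exp\big(\mathbf{1}[y'\neq y]-(W\mathbf{x})_y+(W\mathbf{x})_{y'}\big)$, and $L(W)=\frac1{|S|}\sum_{(\mathbf{x},y)\in S}\ell(W,(\mathbf{x},y))$. $\nabla_iL(W)\in\mathbb{R}^k$ denotes the $i$-th column of the gradient matrix $\nabla L(W)$, and $\mathbf{e}_j\in\mathbb{R}^d$ is the $j$-th standard basis vector. *)

(* Defs.v *)
From Stdlib Require Export Reals Lra Lia Arith List.
Open Scope R_scope.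

Fixpoint rsum (n : nat) (f : nat -> R) : R :=
  match n with O => 0 | S m => rsum m f + f m end.

Fixpoint rmax_abs (n : nat) (f : nat -> R) : R :=
  match n with O => 0 | S m => Rmax (rmax_abs m f) (Rabs (f m)) end.

(* Matrices in R^{k x d}: functions r i, r < k (rows), i < d (columns).
   Examples: (x, y) with x : R^d (nat -> R) and label y in {0,...,k-1}. *)
Definition example := ((nat -> R) * nat)%type.

Definition mxv (d : nat) (W : nat -> nat -> R) (x : nat -> R) (r : nat) : R :=
  rsum d (fun i => W r i * x i).

Definition loss (k d : nat) (W : nat -> nat -> R) (e : example) : R :=
  let (x, y) := e in
  ln (rsum k (fun y' => exp ((if Nat.eqb y' y then 0 else 1)
                              - mxv d W x y + mxv d W x y'))).

Definition Lrisk (k d : nat) (S : list example) (W : nat -> nat -> R) : R :=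
  / INR (length S) * fold_right Rplus 0 (map (loss k d W) S).

Definition supp_sub (k d : nat) (V : nat -> nat -> R) (F : nat -> bool) : Prop :=
  forall i, (i < d)%nat -> (exists r, (r < k)%nat /\ V r i <> 0) -> F i = true.

Definition is_argmin_supp (k d : nat) (S : list example) (F : nat -> bool)
  (W : nat -> nat -> R) : Prop :=
  supp_sub k d W F /\
  forall V, supp_sub k d V F -> Lrisk k d S W <= Lrisk k d S V.

Definition bump (W : nat -> nat -> R) (r i : nat) (t : R) : nat -> nat -> R :=
  fun r' i' => W r' i' + (if andb (Nat.eqb r' r) (Nat.eqb i' i) then t else 0).

Definition is_gradient (k d : nat) (S : list example) (W G : nat -> nat -> R) : Prop :=
  forall r i, (r < k)%nat -> (i < d)%nat ->
    derivable_pt_lim (fun t => Lrisk k d S (bump W r i t)) 0 (G r i).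

Definition add_col (W : nat -> nat -> R) (u : nat -> R) (j : nat) : nat -> nat -> R :=
  fun r i => W r i + (if Nat.eqb i j then u r else 0).

Definition is_glb (E : R -> Prop) (m : R) : Prop :=
  (forall x, E x -> m <= x) /\ (forall b, (forall x, E x -> b <= x) -> b <= m).

(* Main.v *)
Require Import Defs.
From Stdlib Require Import Reals Lra Lia FunctionalExtensionality.
From Coquelicot Require Import Coquelicot.
Open Scope R_scope.

Lemma rsum_ext n f g : (forall i, (i < n)%nat -> f i = g i) -> rsum n f = rsum n g.
Proof. induction n; simpl; intros H; auto. rewrite IHn by (intros; apply H; lia). rewrite H by lia. auto. Qed.

Lemma rsum_le n f g : (forall i, (i < n)%nat -> f i <= g i) -> rsum n f <= rsum n g.
Proof. induction n; simpl; intros H; [lra|]. assert (f n <= g n) by (apply H; lia).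
  assert (rsum n f <= rsum n g) by (apply IHn; intros; apply H; lia). lra. Qed.

Lemma rsum_plus n f g : rsum n (fun i => f i + g i) = rsum n f + rsum n g.
Proof. induction n; simpl; [lra|]. rewrite IHn. lra. Qed.

Lemma rsum_scal n c f : rsum n (fun i => c * f i) = c * rsum n f.
Proof. induction n; simpl; [lra|]. rewrite IHn. lra. Qed.

Lemma rsum_opp n f : rsum n (fun i => - f i) = - rsum n f.
Proof. induction n; simpl; [lra|]. rewrite IHn. lra. Qed.

Lemma rsum_zero n : rsum n (fun _ => 0) = 0.
Proof. induction n; simpl; [lra|]. rewrite IHn. lra. Qed.

Lemma rsum_swap n m f : rsum n (fun i => rsum m (fun j => f i j)) = rsum m (fun j => rsum n (fun i => f i j)).
Proof. induction n; simpl. rewrite rsum_zero; auto. rewrite IHn, <- rsum_plus. auto. Qed.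

Lemma rsum_delta n i f : (i < n)%nat -> rsum n (fun a => if Nat.eqb a i then f a else 0) = f i.
Proof. induction n; intros H; [lia|]. simpl. destruct (Nat.eq_dec i n).
  - subst. rewrite Nat.eqb_refl. rewrite (rsum_ext n _ (fun _ => 0)). rewrite rsum_zero; lra.
    intros a Ha. destruct (Nat.eqb_spec a n); [lia|auto].
  - rewrite IHn by lia. destruct (Nat.eqb_spec n i); [lia|lra]. Qed.

Lemma rsum_delta' n i f : (i < n)%nat -> rsum n (fun a => if Nat.eqb i a then f a else 0) = f i.
Proof. intros H. rewrite <- (rsum_delta n i f H). apply rsum_ext. intros a _. rewrite Nat.eqb_sym. auto. Qed.

Lemma rsum_pos n f : (0 < n)%nat -> (forall i, (i < n)%nat -> 0 < f i) -> 0 < rsum n f.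
Proof. induction n; intros Hn H; [lia|]. simpl. destruct n.
  - simpl. specialize (H 0%nat). assert (0 < f 0%nat) by (apply H; lia). lra.
  - assert (0 < rsum (S n) f) by (apply IHn; [lia| intros; apply H; lia]).
    assert (0 < f (S n)) by (apply H; lia). lra. Qed.

Lemma rsum_nonneg n f : (forall i, (i < n)%nat -> 0 <= f i) -> 0 <= rsum n f.
Proof. intros H. rewrite <- (rsum_zero n). apply rsum_le. auto. Qed.

Lemma rsum_abs n f : Rabs (rsum n f) <= rsum n (fun i => Rabs (f i)).
Proof. induction n; simpl. rewrite Rabs_R0; lra.
  eapply Rle_trans; [apply Rabs_triang|]. lra. Qed.

Lemma rmax_abs_ge n f i : (i < n)%nat -> Rabs (f i) <= rmax_abs n f.
Proof. induction n; intros H; [lia|]. simpl. destruct (Nat.eq_dec i n).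
  - subst. apply Rmax_r.
  - eapply Rle_trans; [apply IHn; lia| apply Rmax_l]. Qed.

Lemma rmax_abs_nonneg n f : 0 <= rmax_abs n f.
Proof. induction n; simpl; [lra|]. eapply Rle_trans; [apply IHn|apply Rmax_l]. Qed.

Lemma hder c : derivable_pt_lim (fun y => (1 + y + y^2) * exp (- y)) c (c * (1 - c) * exp (- c)).
Proof. apply is_derive_Reals. auto_derive; auto. ring. Qed.

Lemma exp_quad y : y <= 1 -> exp y <= 1 + y + y ^ 2.
Proof. intros Hy.
  set (h := fun y => (1 + y + y^2) * exp (- y)).
  assert (Hh : 1 <= h y).
  { destruct (Rtotal_order 0 y) as [Hp|[He|Hn]].
    - destruct (MVT_cor2 h (fun c => c * (1 - c) * exp (- c)) 0 y Hp) as [c [Hc1 Hc2]].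
      { intros c _. apply hder. }
      assert (h 0 = 1) by (unfold h; rewrite Ropp_0, exp_0; ring).
      assert (0 <= c * (1 - c) * exp (- c) * (y - 0)).
      { pose proof (exp_pos (- c)). apply Rmult_le_pos; [|lra]. apply Rmult_le_pos; [|lra]. nra. }
      lra.
    - subst. unfold h. rewrite Ropp_0, exp_0; lra.
    - destruct (MVT_cor2 h (fun c => c * (1 - c) * exp (- c)) y 0 Hn) as [c [Hc1 Hc2]].
      { intros c _. apply hder. }
      assert (h 0 = 1) by (unfold h; rewrite Ropp_0, exp_0; ring).
      assert (c * (1 - c) * exp (- c) * (0 - y) <= 0).
      { pose proof (exp_pos (- c)). assert (c * (1 - c) <= 0) by nra.
        assert (c * (1 - c) * exp (- c) <= 0) by nra. nra. }
      lra. }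
  unfold h in Hh. pose proof (exp_pos y). rewrite exp_Ropp in Hh.
  apply Rmult_le_compat_r with (r := exp y) in Hh; [|lra].
  rewrite Rmult_assoc, Rinv_l in Hh by lra. lra.
Qed.

Definition zf (d : nat) (V : nat -> nat -> R) (e : example) (a : nat) : R :=
  (if Nat.eqb a (snd e) then 0 else 1) - mxv d V (fst e) (snd e) + mxv d V (fst e) a.
Definition Zs k d V e := rsum k (fun a => exp (zf d V e a)).
Lemma loss_eq k d V e : loss k d V e = ln (Zs k d V e).
Proof. destruct e; reflexivity. Qed.

Definition cc (e : example) (r i a : nat) : R :=
  fst e i * ((if Nat.eqb a r then 1 else 0) - (if Nat.eqb (snd e) r then 1 else 0)).

Lemma mxv_bump d W x a r i t : (i < d)%nat ->
  mxv d (bump W r i t) x a = mxv d W x a + (if Nat.eqb a r then t * x i else 0).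
Proof. intros Hi. unfold mxv, bump.
  rewrite (rsum_ext d _ (fun i' => W a i' * x i' + (if Nat.eqb i' i then (if Nat.eqb a r then t * x i' else 0) else 0))).
  - rewrite rsum_plus, rsum_delta; auto.
  - intros. destruct (Nat.eqb a r), (Nat.eqb i0 i); simpl; ring. Qed.

Lemma mxv_add_col d W x a u j : (j < d)%nat ->
  mxv d (add_col W u j) x a = mxv d W x a + u a * x j.
Proof. intros Hj. unfold mxv, add_col.
  rewrite (rsum_ext d _ (fun i' => W a i' * x i' + (if Nat.eqb i' j then u a * x i' else 0))).
  - rewrite rsum_plus, rsum_delta; auto.
  - intros. destruct (Nat.eqb i j); simpl; ring. Qed.

Lemma mxv_diff d V W x a : mxv d V x a = mxv d W x a + rsum d (fun i => (V a i - W a i) * x i).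
Proof. unfold mxv. rewrite <- rsum_plus. apply rsum_ext. intros; ring. Qed.

Lemma zf_bump d W e r i t a : (i < d)%nat ->
  zf d (bump W r i t) e a = zf d W e a + t * cc e r i a.
Proof. intros Hi. unfold zf, cc. rewrite !mxv_bump by auto.
  destruct (Nat.eqb a r), (Nat.eqb (snd e) r); ring. Qed.

Lemma zf_add_col d W e u j a : (j < d)%nat ->
  zf d (add_col W u j) e a = zf d W e a + (u a * fst e j - u (snd e) * fst e j).
Proof. intros Hj. unfold zf. rewrite !mxv_add_col by auto. ring. Qed.

Lemma cc_sum k e j u a : (a < k)%nat -> (snd e < k)%nat ->
  rsum k (fun r => u r * cc e r j a) = u a * fst e j - u (snd e) * fst e j.
Proof. intros Ha Hy. unfold cc.
  rewrite (rsum_ext k _ (fun r => (if Nat.eqb a r then u r * fst e j else 0) + - (if Nat.eqb (snd e) r then u r * fst e j else 0))).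
  - rewrite rsum_plus, rsum_opp, !rsum_delta' by auto. ring.
  - intros. destruct (Nat.eqb a i), (Nat.eqb (snd e) i); ring. Qed.

Lemma zf_diff k d V W e a : (a < k)%nat -> (snd e < k)%nat ->
  zf d V e a = zf d W e a + rsum d (fun i => rsum k (fun r => (V r i - W r i) * cc e r i a)).
Proof. intros Ha Hy.
  rewrite (rsum_ext d _ (fun i => (V a i - W a i) * fst e i - (V (snd e) i - W (snd e) i) * fst e i)).
  2: { intros i _. apply (cc_sum k e i (fun r => V r i - W r i) a Ha Hy). }
  rewrite (rsum_ext d _ (fun i => (V a i - W a i) * fst e i + - ((V (snd e) i - W (snd e) i) * fst e i))) by (intros; ring).
  rewrite rsum_plus, rsum_opp. unfold zf. rewrite (mxv_diff d V W (fst e) a), (mxv_diff d V W (fst e) (snd e)). ring. Qed.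

Lemma ln_le' x y : 0 < x -> x <= y -> ln x <= ln y.
Proof. intros Hx [H|H]; [left; apply ln_increasing; auto| subst; lra]. Qed.

Lemma Zspos k z : (0 < k)%nat -> 0 < rsum k (fun a => exp (z a)).
Proof. intros. apply rsum_pos; auto. intros; apply exp_pos. Qed.

Lemma rsum_p k z : (0 < k)%nat -> rsum k (fun a => exp (z a) / rsum k (fun a => exp (z a))) = 1.
Proof. intros Hk. pose proof (Zspos k z Hk). set (Z := rsum k (fun a => exp (z a))) in *.
  rewrite (rsum_ext k _ (fun a => / Z * exp (z a))) by (intros; unfold Rdiv; ring).
  rewrite rsum_scal. fold Z. field. lra. Qed.

Lemma rsum_pw k z f : rsum k (fun a => exp (z a) / rsum k (fun a => exp (z a)) * f a)
  = / rsum k (fun a => exp (z a)) * rsum k (fun a => exp (z a) * f a).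
Proof. set (Z := rsum k (fun a => exp (z a))). rewrite <- rsum_scal. apply rsum_ext. intros; unfold Rdiv; ring. Qed.

Lemma lse_convex k z dl : (0 < k)%nat ->
  ln (rsum k (fun a => exp (z a + dl a))) >=
  ln (rsum k (fun a => exp (z a))) + rsum k (fun a => exp (z a) / rsum k (fun a => exp (z a)) * dl a).
Proof. intros Hk. pose proof (Zspos k z Hk). rewrite rsum_pw.
  set (Z := rsum k (fun a => exp (z a))) in *.
  set (c := / Z * rsum k (fun a => exp (z a) * dl a)).
  assert (Hle : exp c * Z <= rsum k (fun a => exp (z a + dl a))).
  { eapply Rle_trans with (rsum k (fun a => exp c * (exp (z a) + (exp (z a) * dl a) + - c * exp (z a)))).
    - rewrite rsum_scal, !rsum_plus, rsum_scal. fold Z. unfold c.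
      right. field. lra.
    - apply rsum_le. intros a _. rewrite exp_plus.
      pose proof (exp_ineq1_le (dl a - c)). pose proof (exp_pos (z a)). pose proof (exp_pos c).
      replace (exp (dl a)) with (exp c * exp (dl a - c)) by (rewrite <- exp_plus; f_equal; ring).
      assert (0 <= exp c * exp (z a) * (exp (dl a - c) - (1 + (dl a - c)))) by
        (apply Rmult_le_pos; [apply Rmult_le_pos|]; lra).
      nra. }
  pose proof (exp_pos c).
  apply Rle_ge. eapply Rle_trans; [|apply ln_le'; [|exact Hle]]; [|nra].
  rewrite ln_mult, ln_exp by lra. lra. Qed.

Lemma lse_smooth k z dl c0 yv t : (0 < k)%nat -> 0 <= t <= 1 ->
  (forall a, (a < k)%nat -> dl a = c0 + yv a /\ Rabs (yv a) <= t) ->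
  ln (rsum k (fun a => exp (z a + dl a))) <=
  ln (rsum k (fun a => exp (z a))) + rsum k (fun a => exp (z a) / rsum k (fun a => exp (z a)) * dl a) + t ^ 2.
Proof. intros Hk Ht H. pose proof (Zspos k z Hk). rewrite rsum_pw.
  set (Z := rsum k (fun a => exp (z a))) in *.
  rewrite (rsum_ext k (fun a => exp (z a) * dl a) (fun a => c0 * exp (z a) + exp (z a) * yv a))
    by (intros a Ha; destruct (H a Ha) as [-> _]; ring).
  rewrite rsum_plus, rsum_scal. fold Z.
  set (m := / Z * rsum k (fun a => exp (z a) * yv a)).
  assert (Hle : rsum k (fun a => exp (z a + dl a)) <= exp (c0 + m + t ^ 2) * Z).
  { eapply Rle_trans with (rsum k (fun a => exp c0 * ((1 + t^2) * exp (z a) + exp (z a) * yv a))).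
    - apply rsum_le. intros a Ha. destruct (H a Ha) as [Hd Hy]. rewrite Hd.
      rewrite !exp_plus. pose proof (exp_pos (z a)). pose proof (exp_pos c0).
      assert (Hb : - t <= yv a <= t) by (unfold Rabs in Hy; destruct Rcase_abs in Hy; lra).
      assert (H3 : yv a <= 1) by lra.
      pose proof (exp_quad (yv a) H3).
      assert (yv a ^ 2 <= t ^ 2) by nra.
      assert (exp (yv a) <= 1 + t ^ 2 + yv a) by lra.
      assert (0 <= exp c0 * exp (z a) * ((1 + t ^ 2 + yv a) - exp (yv a))) by
        (apply Rmult_le_pos; [apply Rmult_le_pos|]; lra).
      nra.
    - rewrite rsum_scal, rsum_plus, rsum_scal. fold Z.
      pose proof (exp_pos c0). pose proof (exp_ineq1_le (m + t^2)).
      replace (exp (c0 + m + t ^ 2)) with (exp c0 * exp (m + t ^ 2)) by (rewrite <- exp_plus; f_equal; ring).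
      assert (rsum k (fun a => exp (z a) * yv a) = m * Z) by (unfold m; field; lra).
      rewrite H3. rewrite Rmult_assoc. apply Rmult_le_compat_l; [lra|]. nra. }
  pose proof (Zspos k (fun a => z a + dl a) Hk).
  eapply Rle_trans; [apply ln_le'; [exact H1|exact Hle]|].
  rewrite ln_mult, ln_exp by (try apply exp_pos; lra).
  replace (/ Z * (c0 * Z + rsum k (fun a => exp (z a) * yv a))) with (c0 + m) by (unfold m; field; lra).
  lra. Qed.

Lemma dpl_ext f g x l : (forall t, f t = g t) -> derivable_pt_lim f x l -> derivable_pt_lim g x l.
Proof. intros H. replace g with f; auto. apply functional_extensionality; auto. Qed.

Lemma rsum_deriv k z c : derivable_pt_lim (fun t => rsum k (fun a => exp (z a + t * c a))) 0
   (rsum k (fun a => exp (z a) * c a)).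
Proof. induction k; simpl.
  - apply (dpl_ext (fct_cte 0)); [reflexivity|]. apply derivable_pt_lim_const.
  - apply (derivable_pt_lim_plus (fun t => rsum k (fun a => exp (z a + t * c a))) (fun t => exp (z k + t * c k))); auto.
    apply is_derive_Reals. replace (exp (z k) * c k) with (exp (z k + 0 * c k) * (0 + (1 * c k + 0 * 0))) at 1.
    2:{ replace (z k + 0 * c k) with (z k) by ring. ring. }
    auto_derive; auto. ring.
Qed.

Lemma lse_deriv k z c : (0 < k)%nat ->
  derivable_pt_lim (fun t => ln (rsum k (fun a => exp (z a + t * c a)))) 0
   (rsum k (fun a => exp (z a) / rsum k (fun a => exp (z a)) * c a)).
Proof. intros Hk. rewrite rsum_pw. pose proof (Zspos k z Hk).
  assert (E : rsum k (fun a => exp (z a + 0 * c a)) = rsum k (fun a => exp (z a))).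
  { apply rsum_ext; intros; f_equal; ring. }
  apply (dpl_ext (comp ln (fun t => rsum k (fun a => exp (z a + t * c a))))); [reflexivity|].
  rewrite <- E.
  apply (derivable_pt_lim_comp (fun t => rsum k (fun a => exp (z a + t * c a))) ln 0); [apply rsum_deriv|].
  apply derivable_pt_lim_ln. rewrite E. auto. Qed.

Definition lsum (S : list example) (f : example -> R) := fold_right Rplus 0 (map f S).
Definition pw k d W e a := exp (zf d W e a) / Zs k d W e.
Definition ge k d W e r i := rsum k (fun a => pw k d W e a * cc e r i a).

Lemma lsum_le S f g : (forall e, In e S -> f e <= g e) -> lsum S f <= lsum S g.
Proof. induction S; unfold lsum in *; simpl; intros H; [lra|].
  assert (f a <= g a) by (apply H; simpl; auto).
  assert (fold_right Rplus 0 (map f S) <= fold_right Rplus 0 (map g S)) by (apply IHS; intros; apply H; simpl; auto). lra. Qed.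
Lemma lsum_plus S f g : lsum S (fun e => f e + g e) = lsum S f + lsum S g.
Proof. induction S; unfold lsum in *; simpl; [lra|]. rewrite IHS. ring. Qed.
Lemma lsum_scal S c f : lsum S (fun e => c * f e) = c * lsum S f.
Proof. induction S; unfold lsum in *; simpl; [lra|]. rewrite IHS. ring. Qed.
Lemma lsum_const S c : lsum S (fun _ => c) = INR (length S) * c.
Proof. induction S; unfold lsum in *; [simpl; lra|]. change (length (a :: S)) with (Datatypes.S (length S)).
  rewrite S_INR. simpl. rewrite IHS. ring. Qed.
Lemma lsum_rsum S n f : lsum S (fun e => rsum n (fun i => f i e)) = rsum n (fun i => lsum S (f i)).
Proof. induction S; unfold lsum in *; simpl. rewrite rsum_zero; auto. rewrite IHS, <- rsum_plus. auto. Qed.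

Lemma swap_w k n p g : rsum k (fun a => p a * rsum n (fun i => g i a)) = rsum n (fun i => rsum k (fun a => p a * g i a)).
Proof. rewrite (rsum_ext k _ (fun a => rsum n (fun i => p a * g i a))).
  - apply rsum_swap.
  - intros; rewrite rsum_scal; auto. Qed.

Lemma lsum_deriv (S : list example) (F : R -> example -> R) f' :
  (forall e, In e S -> derivable_pt_lim (fun t => F t e) 0 (f' e)) ->
  derivable_pt_lim (fun t => lsum S (F t)) 0 (lsum S f').
Proof. induction S; intros H; unfold lsum in *; simpl.
  - apply (dpl_ext (fct_cte 0)); [reflexivity|]. apply derivable_pt_lim_const.
  - apply (derivable_pt_lim_plus (fun t => F t a) (fun t => fold_right Rplus 0 (map (F t) S))).
    + apply H; simpl; auto.
    + apply IHS. intros; apply H; simpl; auto. Qed.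

Lemma grad_formula k d S W r i : (0 < k)%nat -> (i < d)%nat ->
  derivable_pt_lim (fun t => Lrisk k d S (bump W r i t)) 0
    (/ INR (length S) * lsum S (fun e => ge k d W e r i)).
Proof. intros Hk Hi.
  apply (dpl_ext (fun t => / INR (length S) * lsum S (fun e => ln (rsum k (fun a => exp (zf d W e a + t * cc e r i a)))))).
  - intros t. unfold Lrisk. f_equal. unfold lsum. f_equal. apply map_ext. intros e.
    rewrite loss_eq. unfold Zs. f_equal. apply rsum_ext. intros a _. rewrite zf_bump; auto.
  - apply (derivable_pt_lim_scal (fun t => lsum S (fun e => ln (rsum k (fun a => exp (zf d W e a + t * cc e r i a)))))).
    apply (lsum_deriv S (fun t e => ln (rsum k (fun a => exp (zf d W e a + t * cc e r i a))))).
    intros e _. unfold ge, pw, Zs. apply lse_deriv; auto. Qed.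

Lemma conv_ex k d V W e : (snd e < k)%nat ->
  loss k d V e >= loss k d W e + rsum d (fun i => rsum k (fun r => (V r i - W r i) * ge k d W e r i)).
Proof. intros Hy. assert (Hk : (0 < k)%nat) by lia.
  rewrite !loss_eq. unfold Zs.
  rewrite (rsum_ext k (fun a => exp (zf d V e a))
     (fun a => exp (zf d W e a + rsum d (fun i => rsum k (fun r => (V r i - W r i) * cc e r i a)))))
   by (intros a Ha; rewrite (zf_diff k d V W e a Ha Hy); auto).
  eapply Rge_trans; [apply lse_convex; auto|]. right. f_equal.
  rewrite swap_w. apply rsum_ext. intros i _. rewrite swap_w. apply rsum_ext. intros r _.
  unfold ge, pw, Zs. rewrite <- rsum_scal. apply rsum_ext. intros; ring. Qed.

Lemma smooth_ex k d W e u j t : (snd e < k)%nat -> (j < d)%nat -> Rabs (fst e j) <= 1 ->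
  0 <= t <= 1 -> (forall a, (a < k)%nat -> Rabs (u a) <= t) ->
  loss k d (add_col W u j) e <= loss k d W e + rsum k (fun r => u r * ge k d W e r j) + t ^ 2.
Proof. intros Hy Hj Hx Ht Hu. assert (Hk : (0 < k)%nat) by lia.
  rewrite !loss_eq. unfold Zs.
  rewrite (rsum_ext k (fun a => exp (zf d (add_col W u j) e a))
     (fun a => exp (zf d W e a + (u a * fst e j - u (snd e) * fst e j))))
   by (intros a Ha; rewrite zf_add_col; auto).
  eapply Rle_trans.
  - apply (lse_smooth k (zf d W e) _ (- (u (snd e) * fst e j)) (fun a => u a * fst e j) t Hk Ht).
    intros a Ha. split; [ring|]. rewrite Rabs_mult. pose proof (Hu a Ha). pose proof (Rabs_pos (u a)).
    pose proof (Rabs_pos (fst e j)). nra.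
  - right. f_equal. f_equal.
    rewrite (rsum_ext k _ (fun a => exp (zf d W e a) / rsum k (fun a0 => exp (zf d W e a0)) * rsum k (fun r => u r * cc e r j a)))
      by (intros a Ha; rewrite cc_sum; auto).
    rewrite swap_w. apply rsum_ext. intros r _. unfold ge, pw, Zs. rewrite <- rsum_scal. apply rsum_ext. intros; ring. Qed.

Lemma ind_sum k a : (a < k)%nat -> rsum k (fun r => if Nat.eqb a r then 1 else 0) = 1.
Proof. intros H. apply (rsum_delta' k a (fun _ => 1) H). Qed.

Lemma gbound_ex k d W e j : (snd e < k)%nat -> Rabs (fst e j) <= 1 ->
  rsum k (fun r => Rabs (ge k d W e r j)) <= 2.
Proof. intros Hy Hx. assert (Hk : (0 < k)%nat) by lia.
  assert (Hp : forall a, 0 <= pw k d W e a).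
  { intros a. unfold pw, Zs. pose proof (Zspos k (zf d W e) Hk). pose proof (exp_pos (zf d W e a)).
    unfold Rdiv. apply Rmult_le_pos; [lra|]. left; apply Rinv_0_lt_compat; auto. }
  eapply Rle_trans with (rsum k (fun r => rsum k (fun a => pw k d W e a * ((if Nat.eqb a r then 1 else 0) + (if Nat.eqb (snd e) r then 1 else 0))))).
  - apply rsum_le. intros r _. unfold ge. eapply Rle_trans; [apply rsum_abs|]. apply rsum_le. intros a _.
    unfold cc. rewrite !Rabs_mult. rewrite (Rabs_right (pw k d W e a)) by (apply Rle_ge; auto).
    pose proof (Hp a). pose proof (Rabs_pos (fst e j)).
    destruct (Nat.eqb a r), (Nat.eqb (snd e) r);
      repeat (first [rewrite Rminus_0_r | rewrite Rminus_diag | rewrite Rminus_0_l | idtac]);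
      try rewrite Rabs_R0; try rewrite Rabs_R1; try rewrite Rabs_Ropp; try rewrite Rabs_R1; try rewrite (Rabs_R1); nra.
  - right. rewrite rsum_swap.
    rewrite (rsum_ext k _ (fun a => pw k d W e a * 2)).
    + rewrite (rsum_ext k _ (fun a => 2 * pw k d W e a)) by (intros; ring). rewrite rsum_scal.
      unfold pw, Zs. rewrite rsum_p; auto. ring.
    + intros a Ha. rewrite rsum_scal, rsum_plus, !ind_sum by auto. ring. Qed.

Lemma lsum_dbl S d k (c : nat -> nat -> R) h :
  lsum S (fun e => rsum d (fun i => rsum k (fun r => c r i * h e r i))) =
  rsum d (fun i => rsum k (fun r => c r i * lsum S (fun e => h e r i))).
Proof. rewrite (lsum_rsum S d (fun i e => rsum k (fun r => c r i * h e r i))).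
  apply rsum_ext. intros i _. rewrite (lsum_rsum S k (fun r e => c r i * h e r i)).
  apply rsum_ext. intros r _. apply lsum_scal. Qed.

Lemma lsum_abs S f : Rabs (lsum S f) <= lsum S (fun e => Rabs (f e)).
Proof. induction S; unfold lsum in *; simpl. rewrite Rabs_R0; lra.
  eapply Rle_trans; [apply Rabs_triang|]. lra. Qed.

Lemma supp_zero k d V F i r : supp_sub k d V F -> (i < d)%nat -> F i = false -> (r < k)%nat -> V r i = 0.
Proof. intros H Hi Hf Hr. destruct (Req_dec (V r i) 0); auto.
  assert (F i = true) by (apply H; auto; exists r; auto). congruence. Qed.

Definition sg (x : R) : R := if Rle_dec 0 x then 1 else -1.
Lemma sg_mul x : sg x * x = Rabs x.
Proof. unfold sg. destruct (Rle_dec 0 x). rewrite Rabs_right; lra. rewrite Rabs_left; lra. Qed.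
Lemma sg_abs x : Rabs (sg x) = 1.
Proof. unfold sg. destruct (Rle_dec 0 x). apply Rabs_R1. rewrite Rabs_left; lra. Qed.

Theorem lemmaA3 (k d : nat) (S : list example) (F Fbar : nat -> bool)
  (W Wstar G : nat -> nat -> R) (j : nat) (m : R) :
  (forall e, In e S ->
     (forall i, (i < d)%nat -> -1 <= fst e i <= 1) /\ (snd e < k)%nat) ->
  (exists i, (i < d)%nat /\ Fbar i = true /\ F i = false) ->
  is_argmin_supp k d S F W ->
  is_argmin_supp k d S Fbar Wstar ->
  is_gradient k d S W G ->
  (j < d)%nat ->
  (forall i, (i < d)%nat ->
     rsum k (fun r => Rabs (G r i)) <= rsum k (fun r => Rabs (G r j))) ->
  is_glb (fun z => exists u : nat -> R, z = Lrisk k d S (add_col W u j)) m ->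
  Lrisk k d S W > Lrisk k d S Wstar ->
  Lrisk k d S W - m >=
    (Lrisk k d S W - Lrisk k d S Wstar) ^ 2 /
    (4 * (rsum d (fun i => if andb (Fbar i) (negb (F i))
                           then rmax_abs k (fun r => Wstar r i) else 0)) ^ 2).
Proof.
  intros Hex _ [HsuppW HminW] [HsuppS HminS] Hgrad Hj Hmax [Hglb1 Hglb2] Hgt.
  destruct S as [|e0 S0] eqn:HS.
  { unfold Lrisk in Hgt. simpl in Hgt. rewrite !Rmult_0_r in Hgt. lra. }
  rewrite <- HS in *.
  assert (Hk : (0 < k)%nat). { destruct (Hex e0) as [_ H]; [rewrite HS; simpl; auto|lia]. }
  assert (HN : 0 < INR (length S)) by (rewrite HS; simpl length; apply lt_0_INR; lia).
  assert (HLr : forall V, Lrisk k d S V = / INR (length S) * lsum S (loss k d V)) by reflexivity.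
  assert (HG : forall r i, (r < k)%nat -> (i < d)%nat -> G r i = / INR (length S) * lsum S (fun e => ge k d W e r i)).
  { intros r i Hr Hi. eapply uniqueness_limite; [apply Hgrad; auto| apply grad_formula; auto]. }
  assert (Hb0 : forall r i, bump W r i 0 = W).
  { intros r i. apply functional_extensionality; intros r'. apply functional_extensionality; intros i'.
    unfold bump. destruct (andb (Nat.eqb r' r) (Nat.eqb i' i)); ring. }
  assert (HGF : forall r i, (r < k)%nat -> (i < d)%nat -> F i = true -> G r i = 0).
  { intros r i Hr Hi HFi.
    pose (pr := exist (fun l => derivable_pt_lim (fun t => Lrisk k d S (bump W r i t)) 0 l) (G r i) (Hgrad r i Hr Hi)).
    assert (H := deriv_minimum (fun t => Lrisk k d S (bump W r i t)) (-1) 1 0 pr).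
    simpl in H. apply H; try lra.
    intros x _ _. rewrite Hb0. apply HminW.
    intros i' Hi' [r' [Hr' Hne]]. destruct (Nat.eqb_spec i' i). { subst; auto. }
    apply HsuppW; auto. exists r'. split; auto. unfold bump in Hne.
    apply Nat.eqb_neq in n. rewrite n, Bool.andb_false_r, Rplus_0_r in Hne. auto. }
  set (N := INR (length S)) in *.
  set (G1 := rsum k (fun r => Rabs (G r j))).
  set (cB := fun i => if andb (Fbar i) (negb (F i)) then rmax_abs k (fun r => Wstar r i) else 0).
  change (rsum d (fun i => if andb (Fbar i) (negb (F i)) then rmax_abs k (fun r => Wstar r i) else 0))
    with (rsum d cB).
  set (B := rsum d cB).
  assert (Hconv : Lrisk k d S Wstar >= Lrisk k d S W +
            rsum d (fun i => rsum k (fun r => (Wstar r i - W r i) * G r i))).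
  { rewrite !HLr.
    assert (H1 : lsum S (fun e => loss k d W e + rsum d (fun i => rsum k (fun r => (Wstar r i - W r i) * ge k d W e r i)))
                <= lsum S (loss k d Wstar)).
    { apply lsum_le. intros e He. apply Rge_le. apply conv_ex. apply (Hex e He). }
    rewrite lsum_plus, (lsum_dbl S d k (fun r i => Wstar r i - W r i) (fun e r i => ge k d W e r i)) in H1.
    rewrite (rsum_ext d (fun i => rsum k (fun r => (Wstar r i - W r i) * G r i))
        (fun i => / N * rsum k (fun r => (Wstar r i - W r i) * lsum S (fun e => ge k d W e r i)))).
    2: { intros i Hi. rewrite <- rsum_scal. apply rsum_ext. intros r Hr. rewrite HG by auto. ring. }
    rewrite rsum_scal.
    assert (0 < / N) by (apply Rinv_0_lt_compat; auto). nra. }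
  assert (HG1 : 0 <= G1) by (apply rsum_nonneg; intros; apply Rabs_pos).
  assert (HB0 : 0 <= B).
  { apply rsum_nonneg. intros i _. unfold cB. destruct (andb (Fbar i) (negb (F i))); [apply rmax_abs_nonneg|lra]. }
  assert (Hbnd : rsum d (fun i => rsum k (fun r => (Wstar r i - W r i) * G r i)) >= - G1 * B).
  { unfold B. rewrite <- rsum_scal. apply Rle_ge. apply rsum_le. intros i Hi. unfold cB.
    destruct (F i) eqn:HFi.
    - rewrite (rsum_ext k _ (fun _ => 0)) by (intros r Hr; rewrite HGF by auto; ring).
      rewrite rsum_zero, Bool.andb_false_r. lra.
    - assert (HW0 : forall r, (r < k)%nat -> W r i = 0) by (intros; eapply supp_zero; eauto).
      destruct (Fbar i) eqn:HFbi; simpl.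
      + set (M := rmax_abs k (fun r => Wstar r i)).
        assert (HM : 0 <= M) by apply rmax_abs_nonneg.
        eapply Rle_trans with (rsum k (fun r => - M * Rabs (G r i))).
        * rewrite rsum_scal. pose proof (Hmax i Hi). fold G1 in H. nra.
        * apply rsum_le. intros r Hr. rewrite HW0 by auto.
          pose proof (rmax_abs_ge k (fun r => Wstar r i) r Hr). simpl in H. fold M in H.
          pose proof (Rabs_pos (G r i)).
          assert (- (Rabs (Wstar r i) * Rabs (G r i)) <= (Wstar r i - 0) * G r i).
          { rewrite <- Rabs_mult. replace (Wstar r i - 0) with (Wstar r i) by ring.
            pose proof (Rle_abs (- (Wstar r i * G r i))). rewrite Rabs_Ropp in H1. lra. }
          nra.
      + assert (HWs0 : forall r, (r < k)%nat -> Wstar r i = 0) by (intros; eapply supp_zero; eauto).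
        rewrite (rsum_ext k _ (fun _ => 0)) by (intros r Hr; rewrite HW0, HWs0 by auto; ring).
        rewrite rsum_zero. lra. }
  assert (Heps : Lrisk k d S W - Lrisk k d S Wstar <= G1 * B) by lra.
  assert (HNi : 0 < / N) by (apply Rinv_0_lt_compat; auto).
  assert (Hxj : forall e, In e S -> Rabs (fst e j) <= 1 /\ (snd e < k)%nat).
  { intros e He. destruct (Hex e He) as [H1 H2]. split; auto. apply Rabs_le. apply H1; auto. }
  assert (HG2 : G1 <= 2).
  { unfold G1. eapply Rle_trans with (rsum k (fun r => / N * lsum S (fun e => Rabs (ge k d W e r j)))).
    - apply rsum_le. intros r Hr. rewrite HG by auto. rewrite Rabs_mult, (Rabs_right (/ N)) by lra.
      apply Rmult_le_compat_l; [lra|]. apply lsum_abs.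
    - rewrite rsum_scal, <- (lsum_rsum S k (fun r e => Rabs (ge k d W e r j))).
      eapply Rle_trans with (/ N * lsum S (fun _ => 2)).
      + apply Rmult_le_compat_l; [lra|]. apply lsum_le. intros e He. destruct (Hxj e He).
        apply gbound_ex; auto.
      + rewrite lsum_const. fold N. right. field. lra. }
  set (t := G1 / 2).
  set (u := fun r => - (t * sg (G r j))).
  assert (Ht : 0 <= t <= 1) by (unfold t; lra).
  assert (Hu : forall a, (a < k)%nat -> Rabs (u a) <= t).
  { intros a _. unfold u. rewrite Rabs_Ropp, Rabs_mult, sg_abs, Rabs_right by lra. lra. }
  assert (Hsm : Lrisk k d S (add_col W u j) <= Lrisk k d S W - t * G1 + t ^ 2).
  { rewrite !HLr.
    assert (H1 : lsum S (loss k d (add_col W u j)) <=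
       lsum S (fun e => loss k d W e + rsum k (fun r => u r * ge k d W e r j) + t ^ 2)).
    { apply lsum_le. intros e He. destruct (Hxj e He). apply smooth_ex; auto. }
    rewrite !lsum_plus, lsum_const in H1. fold N in H1.
    rewrite (lsum_rsum S k (fun r e => u r * ge k d W e r j)) in H1.
    rewrite (rsum_ext k (fun r => lsum S (fun e => u r * ge k d W e r j)) (fun r => N * (u r * G r j))) in H1.
    2: { intros r Hr. rewrite HG by auto. rewrite lsum_scal. field. lra. }
    rewrite rsum_scal in H1.
    rewrite (rsum_ext k (fun r => u r * G r j) (fun r => - t * Rabs (G r j))) in H1.
    2: { intros r Hr. unfold u. rewrite <- sg_mul. ring. }
    rewrite rsum_scal in H1. fold G1 in H1.
    apply Rmult_le_compat_l with (r := / N) in H1; [|lra].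
    replace (/ N * (lsum S (loss k d W) + N * (- t * G1) + N * t ^ 2)) with
      (/ N * lsum S (loss k d W) - t * G1 + t ^ 2) in H1 by (field; lra).
    exact H1. }
  assert (Hm : m <= Lrisk k d S (add_col W u j)) by (apply Hglb1; exists u; auto).
  set (eps := Lrisk k d S W - Lrisk k d S Wstar) in *.
  assert (Hep : 0 < eps) by (unfold eps; lra).
  assert (HBp : 0 < B) by (destruct HB0 as [H|H]; auto; rewrite <- H in Heps; nra).
  assert (Hq : eps / B <= G1).
  { apply (Rmult_le_reg_r B); auto. unfold Rdiv. rewrite Rmult_assoc, Rinv_l by lra. lra. }
  assert (Hq0 : 0 <= eps / B) by (unfold Rdiv; apply Rmult_le_pos; [lra|left; apply Rinv_0_lt_compat; auto]).
  replace (eps ^ 2 / (4 * B ^ 2)) with ((eps / B) ^ 2 / 4) by (field; lra).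
  unfold t in Hsm. nra.
Qed.
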